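(* Let $X$ be a set with at least three points, let $z_1\ne z_2$ be complex numbers, and let $f:\mathcal{P}(X)\setminus\{\varnothing\}\to\{z_1,z_2\}$ be a surjection such that $f(A)+f(B)=f(A\cup B)$ for all nonempty $A,B\subseteq X$ with $A\cap B=\varnothing$. Then $0\in\{z_1,z_2\}$, the family $f^{-1}(f(X))$ is an ultrafilter on $X$, and $\{\varnothing\}\cup f^{-1}(f(X))$ is a connected door topology on $X$.
   Context: $\mathcal{P}(X)$ denotes the power set of $X$. A topology on $X$ is a connected door topology if every proper nonempty subset of $X$ is either open or closed, but not both. *)

(* Defs.v *)
(* complex numbers modelled as R * R (only addition is needed). *)
From Stdlib Require Import Reals.
Open Scope R_scope.

Definition Cplx : Type := (R * R)%type.
Definition C0 : Cplx := (0, 0).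
Definition Cadd (z w : Cplx) : Cplx := (fst z + fst w, snd z + snd w).

Definition nonempty {X : Type} (A : X -> Prop) : Prop := exists x, A x.
Definition emptyset {X : Type} (A : X -> Prop) : Prop := forall x, ~ A x.
Definition setU {X : Type} (A B : X -> Prop) : X -> Prop := fun x => A x \/ B x.
Definition setI {X : Type} (A B : X -> Prop) : X -> Prop := fun x => A x /\ B x.
Definition setC {X : Type} (A : X -> Prop) : X -> Prop := fun x => ~ A x.
Definition setT {X : Type} : X -> Prop := fun _ => True.
Definition disjoint {X : Type} (A B : X -> Prop) : Prop := forall x, ~ (A x /\ B x).
Definition subset {X : Type} (A B : X -> Prop) : Prop := forall x, A x -> B x.
Definition proper {X : Type} (A : X -> Prop) : Prop := exists x, ~ A x.

Definition ultrafilter {X : Type} (U : (X -> Prop) -> Prop) : Prop :=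
  U setT /\
  (forall A, U A -> nonempty A) /\
  (forall A B, U A -> subset A B -> U B) /\
  (forall A B, U A -> U B -> U (setI A B)) /\
  (forall A, U A \/ U (setC A)).

Definition is_topology {X : Type} (T : (X -> Prop) -> Prop) : Prop :=
  (forall A, emptyset A -> T A) /\
  T setT /\
  (forall F : (X -> Prop) -> Prop, (forall A, F A -> T A) ->
      T (fun x => exists A, F A /\ A x)) /\
  (forall A B, T A -> T B -> T (setI A B)).

Definition connected_door_topology {X : Type} (T : (X -> Prop) -> Prop) : Prop :=
  is_topology T /\
  forall A, nonempty A -> proper A ->
    (T A /\ ~ T (setC A)) \/ (~ T A /\ T (setC A)).

(* Main.v *)
Require Import Defs.
From Stdlib Require Import Reals Lra Classical FunctionalExtensionality PropExtensionality.

Lemma c_r (z w : Cplx) : Cadd z w = z -> w = C0.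
Proof. destruct z as [a b], w as [c d]; unfold Cadd, C0; simpl; intro H;
  inversion H; f_equal; lra. Qed.
Lemma c_l (z w : Cplx) : Cadd z w = w -> z = C0.
Proof. destruct z as [a b], w as [c d]; unfold Cadd, C0; simpl; intro H;
  inversion H; f_equal; lra. Qed.
Lemma c4 (z w : Cplx) : Cadd z z = w -> Cadd w w = z -> z = C0.
Proof. destruct z as [a b], w as [c d]; unfold Cadd, C0; simpl; intros H H';
  inversion H; inversion H'; f_equal; lra. Qed.
Lemma c2 (z : Cplx) : Cadd z z = C0 -> z = C0.
Proof. destruct z as [a b]; unfold Cadd, C0; simpl; intro H;
  inversion H; f_equal; lra. Qed.
Lemma cadd0 (z : Cplx) : Cadd z C0 = z.
Proof. destruct z as [a b]; unfold Cadd, C0; simpl; f_equal; ring. Qed.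
Lemma cadd00 : Cadd C0 C0 = C0.
Proof. apply cadd0. Qed.
Lemma cadd0l (z : Cplx) : Cadd C0 z = z.
Proof. destruct z as [a b]; unfold Cadd, C0; simpl; f_equal; ring. Qed.

Lemma fext {X : Type} (A B : X -> Prop) : (forall x, A x <-> B x) -> A = B.
Proof. intro H; apply functional_extensionality; intro x;
  apply propositional_extensionality; auto. Qed.

Lemma key (z1 z2 x y r : Cplx) :
  (x = z1 \/ x = z2) -> (y = z1 \/ y = z2) -> (r = z1 \/ r = z2) ->
  (Cadd x y = z1 \/ Cadd x y = z2) ->
  (Cadd (Cadd x y) r = z1 \/ Cadd (Cadd x y) r = z2) -> z1 = C0 \/ z2 = C0.
Proof.
  intros [-> | ->] [-> | ->] [-> | ->] [Hs|Hs] Ht; try rewrite Hs in Ht;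
  try destruct Ht as [Ht|Ht];
  first [ left; solve [eapply c_r; eassumption | eapply c_l; eassumption | eapply c4; eassumption]
        | right; solve [eapply c_r; eassumption | eapply c_l; eassumption | eapply c4; eassumption] ].
Qed.

Section Rest.
Variables (X : Type) (x0 : X) (f : (X -> Prop) -> Cplx) (u : Cplx).
Hypothesis hu : u <> C0.
Hypothesis hr : forall A, nonempty A -> f A = C0 \/ f A = u.
Hypothesis hadd : forall A B, nonempty A -> nonempty B -> disjoint A B ->
            Cadd (f A) (f B) = f (setU A B).
Hypothesis hs : exists A, nonempty A /\ f A = u.

Lemma L1 A B : nonempty A -> nonempty B -> disjoint A B -> f A = u -> f B = u -> False.
Proof.
  intros nA nB d fA fB. pose proof (hadd _ _ nA nB d) as H.
  rewrite fA, fB in H.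
  assert (nU : nonempty (setU A B)) by (destruct nA as [x Hx]; exists x; left; auto).
  destruct (hr _ nU) as [E|E]; rewrite E in H.
  - apply hu, c2; auto.
  - apply hu. exact (c_r _ _ H).
Qed.

Lemma L2 A B : nonempty A -> nonempty B -> disjoint A B -> f (setU A B) = u ->
  f A = u \/ f B = u.
Proof.
  intros nA nB d E. pose proof (hadd _ _ nA nB d) as H.
  destruct (hr _ nA) as [a|a]; auto. destruct (hr _ nB) as [b|b]; auto.
  rewrite a, b, cadd00, E in H. exfalso; apply hu; auto.
Qed.

Definition U A := nonempty A /\ f A = u.

Lemma Up A B : U A -> subset A B -> U B.
Proof.
  intros [nA fA] sub.
  assert (nB : nonempty B) by (destruct nA as [x Hx]; exists x; auto).
  destruct (classic (exists x, B x /\ ~ A x)) as [[y Hy]|N].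
  - set (D := fun x => B x /\ ~ A x).
    assert (nD : nonempty D) by (exists y; exact Hy).
    assert (dAD : disjoint A D) by (intros x [h1 [_ h2]]; auto).
    assert (EB : B = setU A D).
    { apply fext; intro x; unfold setU, D; split.
      - intro Bx; destruct (classic (A x)); auto.
      - intros [h|[h _]]; auto. }
    split; auto. rewrite EB, <- (hadd _ _ nA nD dAD), fA.
    destruct (hr _ nD) as [e|e].
    + rewrite e; apply cadd0.
    + exfalso; exact (L1 _ _ nA nD dAD fA e).
  - assert (EB : B = A).
    { apply fext; intro x; split; auto. intro Bx.
      apply NNPP; intro nAx; apply N; exists x; auto. }
    subst; split; auto.
Qed.

Lemma UT : U setT.
Proof. destruct hs as [A HA]. apply (Up A); [exact HA|intros x _; exact I]. Qed.

Lemma Ucompl A : U A \/ U (setC A).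
Proof.
  destruct (classic (nonempty A)) as [nA|nA].
  - destruct (classic (nonempty (setC A))) as [nC|nC].
    + assert (d : disjoint A (setC A)) by (intros x [h1 h2]; auto).
      assert (E : setU A (setC A) = setT).
      { apply fext; intro x; unfold setU, setC, setT; split; auto.
        intros _; apply classic. }
      destruct UT as [_ fT]. rewrite <- E in fT.
      destruct (L2 _ _ nA nC d fT); [left|right]; split; auto.
    + left. assert (E : A = setT).
      { apply fext; intro x; unfold setT; split; auto. intros _.
        apply NNPP; intro h; apply nC; exists x; exact h. }
      rewrite E; exact UT.
  - right. assert (E : setC A = setT).
    { apply fext; intro x; unfold setT, setC; split; auto. intros _ h.
      apply nA; exists x; exact h. }
    rewrite E; exact UT.
Qed.

Lemma UI A B : U A -> U B -> U (setI A B).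
Proof.
  intros [nA fA] [nB fB].
  destruct (classic (nonempty (setI A B))) as [nI|nI].
  - destruct (classic (exists x, A x /\ ~ B x)) as [[y Hy]|N].
    + set (D := fun x => A x /\ ~ B x).
      assert (nD : nonempty D) by (exists y; exact Hy).
      assert (d : disjoint (setI A B) D) by (intros x [[_ h1] [_ h2]]; auto).
      assert (EA : A = setU (setI A B) D).
      { apply fext; intro x; unfold setU, setI, D; split.
        - intro Ax; destruct (classic (B x)); auto.
        - intros [[h _]|[h _]]; auto. }
      rewrite EA in fA. destruct (L2 _ _ nI nD d fA) as [h|h].
      * split; auto.
      * exfalso. apply (L1 D B nD nB); auto. intros x [[_ h1] h2]; auto.
    + assert (E : setI A B = A).
      { apply fext; intro x; unfold setI; split; [intros [h _]; auto|].
        intro Ax; split; auto. apply NNPP; intro h; apply N; exists x; auto. }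
      rewrite E; split; auto.
  - exfalso. apply (L1 A B nA nB); auto. intros x h; apply nI; exists x; exact h.
Qed.

Lemma rest : f setT = u /\
  ultrafilter (fun A => nonempty A /\ f A = f setT) /\
  connected_door_topology (fun A => emptyset A \/ (nonempty A /\ f A = f setT)).
Proof.
  assert (fT : f setT = u) by (destruct UT; auto).
  split; auto. rewrite fT. split.
  - split; [exact UT|]. split; [intros A [h _]; exact h|].
    split; [exact Up|]. split; [exact UI|exact Ucompl].
  - split.
    + split; [intros A h; left; exact h|].
      split; [right; exact UT|].
      split.
      * intros F HF.
        destruct (classic (exists A, F A /\ U A)) as [[A [FA UA]]|N].
        -- right. apply (Up A _ UA). intros x Ax; exists A; auto.
        -- left. intros x [A [FA Ax]]. destruct (HF A FA) as [e|e].
           ++ exact (e x Ax).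
           ++ apply N; exists A; auto.
      * intros A B [eA|uA] [eB|uB].
        -- left; intros x [h _]; exact (eA x h).
        -- left; intros x [h _]; exact (eA x h).
        -- left; intros x [_ h]; exact (eB x h).
        -- right; exact (UI _ _ uA uB).
    + intros A nA [y Hy].
      assert (nC : nonempty (setC A)) by (exists y; exact Hy).
      assert (ne : ~ emptyset A) by (intros e; destruct nA as [x Hx]; exact (e x Hx)).
      assert (neC : ~ emptyset (setC A)) by (intros e; exact (e y Hy)).
      assert (d : disjoint A (setC A)) by (intros x [h1 h2]; auto).
      destruct (Ucompl A) as [h|h].
      * left; split; [right; exact h|].
        intros [e|h']; [exact (neC e)|].
        exact (L1 _ _ nA nC d (proj2 h) (proj2 h')).
      * right; split; [|right; exact h].
        intros [e|h']; [exact (ne e)|].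
        exact (L1 _ _ nA nC d (proj2 h') (proj2 h)).
Qed.
End Rest.

Theorem theorem2 (X : Type)
  (H3 : exists a b c : X, a <> b /\ a <> c /\ b <> c)
  (z1 z2 : Cplx) (hz : z1 <> z2)
  (f : (X -> Prop) -> Cplx)
  (hrange : forall A, nonempty A -> f A = z1 \/ f A = z2)
  (hsurj1 : exists A, nonempty A /\ f A = z1)
  (hsurj2 : exists A, nonempty A /\ f A = z2)
  (hadd : forall A B, nonempty A -> nonempty B -> disjoint A B ->
            Cadd (f A) (f B) = f (setU A B)) :
  (z1 = C0 \/ z2 = C0) /\
  ultrafilter (fun A => nonempty A /\ f A = f setT) /\
  connected_door_topology
    (fun A => emptyset A \/ (nonempty A /\ f A = f setT)).
Proof.
  destruct H3 as [a [b [c [hab [hac hbc]]]]].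
  set (P := fun x : X => x = a). set (Q := fun x : X => x = b).
  set (R := fun x : X => x <> a /\ x <> b).
  assert (nP : nonempty P) by (exists a; reflexivity).
  assert (nQ : nonempty Q) by (exists b; reflexivity).
  assert (nR : nonempty R) by (exists c; split; auto).
  assert (dPQ : disjoint P Q) by (intros x [h1 h2]; apply hab; unfold P, Q in *; congruence).
  assert (nPQ : nonempty (setU P Q)) by (exists a; left; reflexivity).
  assert (dPQR : disjoint (setU P Q) R) by (intros x [[h|h] [h1 h2]]; auto).
  pose proof (hadd _ _ nP nQ dPQ) as E1.
  pose proof (hadd _ _ nPQ nR dPQR) as E2.
  assert (nPQR : nonempty (setU (setU P Q) R)) by (exists a; left; left; reflexivity).
  assert (Z : z1 = C0 \/ z2 = C0).
  { apply (key z1 z2 (f P) (f Q) (f R)); auto.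
    - rewrite E1; auto.
    - rewrite E1, E2; auto. }
  split; auto.
  destruct Z as [Z|Z].
  - subst z1. destruct (rest X f z2) as [_ H]; auto;
    intros A nA; destruct (hrange A nA); auto.
  - subst z2. destruct (rest X f z1) as [_ H]; auto;
    intros A nA; destruct (hrange A nA); auto.
Qed.
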